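(* For $k=1,2,3,4$, the number of $\sim_2$-equivalence classes of $[GL(k,2)]^{2}$ (i.e. the cardinality of $Cat_{k,2}$) is $1,\ 4,\ 58,\ 4822$, respectively.
   Context: $[GL(k,2)]^{2}$ is the set of $k\times 2k$ binary matrices $(A_1\mid A_2)$ with $A_1,A_2\in GL(k,2)$. For $A,B\in[GL(k,2)]^{2}$, $A\sim_2B$ iff $A=P_kBP_{2k}$ for some $k\times k$ permutation matrix $P_k$ and some $2k\times 2k$ permutation matrix $P_{2k}$. $Cat_{k,2}$ denotes a set of representatives of the $\sim_2$-classes. *)

(* Defs.v *)
From HB Require Import structures.
From mathcomp Require Import all_boot all_order all_algebra all_fingroup.
Set Implicit Arguments. Unset Strict Implicit. Unset Printing Implicit Defensive.
Import GRing.Theory.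
Local Open Scope ring_scope.

(* [GL(k,2)]^2 : k x 2k binary matrices (A1 | A2) with A1, A2 invertible. *)
Definition GL2_pairs (k : nat) : {set 'M['F_2]_(k, k + k)} :=
  [set A | (lsubmx A \in unitmx) && (rsubmx A \in unitmx)].

Definition sim2 (k : nat) (A B : 'M['F_2]_(k, k + k)) : bool :=
  [exists P : 'M['F_2]_k, exists Q : 'M['F_2]_(k + k),
     [&& is_perm_mx P, is_perm_mx Q & A == P *m B *m Q]].

Definition sim2_classes (k : nat) : {set {set 'M['F_2]_(k, k + k)}} :=
  [set [set B in GL2_pairs k | sim2 A B] | A in GL2_pairs k].

Definition card_Cat2 (k : nat) : nat := #|sim2_classes k|.

(* Main.v *)
Require Import Defs.
From mathcomp Require Import all_boot all_order all_algebra all_fingroup.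
From mathcomp Require Import zify.
Set Implicit Arguments. Unset Strict Implicit. Unset Printing Implicit Defensive.

Fixpoint allf {T} (f : T -> bool) (s : seq T) : bool :=
  if s is x :: s' then (if f x then allf f s' else false) else true.
Fixpoint hasf {T} (f : T -> bool) (s : seq T) : bool :=
  if s is x :: s' then (if f x then true else hasf f s') else false.
Lemma allfE T (f : T -> bool) s : allf f s = all f s.
Proof. by elim: s => //= x s ->; case: (f x). Qed.
Lemma hasfE T (f : T -> bool) s : hasf f s = has f s.
Proof. by elim: s => //= x s ->; case: (f x). Qed.

Lemma cons_inj T (x : T) : injective (cons x). Proof. by move=> a b []. Qed.

Fixpoint allbs (k : nat) : seq (seq bool) :=
  if k is k'.+1 then map (cons false) (allbs k') ++ map (cons true) (allbs k') else [:: [::]].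

Lemma mem_allbs k c : (c \in allbs k) = (size c == k).
Proof.
elim: k c => [|k IH] c; first by case: c.
rewrite /= mem_cat; case: c => [|b c] /=.
  by apply/negbTE; rewrite negb_or; apply/andP; split; apply/mapP => -[].
rewrite eqSS -IH; case: b.
  rewrite (mem_map (@cons_inj _ _)); apply/orP/idP => [[|//]|]; last by right.
  by case/mapP.
rewrite (mem_map (@cons_inj _ _)); apply/orP/idP => [[//|]|]; last by left.
by case/mapP.
Qed.

Lemma uniq_allbs k : uniq (allbs k).
Proof.
elim: k => //= k IH; rewrite cat_uniq !map_inj_uniq //; try exact: cons_inj.
rewrite IH /= andbT; apply/hasPn => x /mapP [y _ ->]; apply/mapP => -[z _] //.
Qed.

Lemma size_allbs k : size (allbs k) = 2 ^ k.
Proof. by elim: k => //= k IH; rewrite size_cat !size_map IH expnS mul2n addnn. Qed.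

Fixpoint lexn (s t : seq nat) : bool :=
  match s, t with
  | [::], _ => true
  | _ :: _, [::] => false
  | a :: s', b :: t' => (a < b) || ((a == b) && lexn s' t')
  end.

Lemma lexn_refl s : lexn s s.
Proof. by elim: s => //= a s ->; rewrite eqxx orbT. Qed.

Lemma lexn_anti s t : lexn s t -> lexn t s -> s = t.
Proof.
elim: s t => [|a s IH] [|b t] //=.
case: (ltngtP a b) => //= -> /IH H /H ->; done.
Qed.

Lemma lexn_trans s t u : lexn s t -> lexn t u -> lexn s u.
Proof.
elim: s t u => [|a s IH] [|b t] [|c u] //=.
case: (ltngtP a b) => //= [ab _|<- H1].
  case: (ltngtP b c) => //= [bc|<-] _; first by rewrite (ltn_trans ab bc).
  by rewrite ab.
case: (ltngtP a c) => //= _ H2; exact: IH H1 H2.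
Qed.

Lemma lexn_total s t : lexn s t || lexn t s.
Proof.
elim: s t => [|a s IH] [|b t] //=.
by case: (ltngtP a b) => //= <-; rewrite !eqxx /=.
Qed.

Fixpoint lexm (w s t : seq nat) : bool :=
  match s, t with
  | [::], _ => true
  | _ :: _, [::] => false
  | a :: s', i :: t' => let b := nth 0 w i in
      if a < b then true else if a == b then lexm w s' t' else false
  end.

Lemma lexmE w s t : lexm w s t = lexn s [seq nth 0 w i | i <- t].
Proof.
elim: s t => [|a s IH] [|i t] //=; rewrite IH.
by case: ltngtP.
Qed.

Definition lmin (x : seq nat) (s : seq (seq nat)) :=
  foldr (fun a m => if lexn a m then a else m) x s.

Lemma lmin_mem x s : lmin x s \in x :: s.
Proof.
elim: s => [|a s IH] /=; first by rewrite inE.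
case: ifP => _; first by rewrite !inE eqxx orbT.
move: IH; rewrite !inE; case/orP => ->; rewrite ?orbT //.
Qed.

Lemma lmin_le x s y : y \in x :: s -> lexn (lmin x s) y.
Proof.
elim: s y => [|a s IH] y /=; first by rewrite inE => /eqP ->; exact: lexn_refl.
rewrite !inE => Hy.
case: ifP => H.
  case/or3P: Hy => [/eqP->|/eqP->|Hy]; first exact: (lexn_trans H (IH _ (mem_head _ _))).
    exact: lexn_refl.
  by apply: (lexn_trans H); apply: IH; rewrite inE Hy orbT.
case/or3P: Hy => [/eqP->|/eqP->|Hy]; first by apply: IH; rewrite mem_head.
  by move: (lexn_total a (lmin x s)); rewrite H.
by apply: IH; rewrite inE Hy orbT.
Qed.

Fixpoint comps (n m : nat) : seq (seq nat) :=
  if n is n'.+1 then [seq i :: w | i <- iota 0 m.+1, w <- comps n' (m - i)]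
  else if m == 0 then [:: [::]] else [::].

Lemma mem_comps n m w : (w \in comps n m) = (size w == n) && (sumn w == m).
Proof.
elim: n m w => [|n IH] m w.
  case: w => [|a w] /=; case: m => //= m; by rewrite in_nil.
apply/allpairsPdep/idP => [[i [u [Hi Hu ->]]]|].
  move: Hu; rewrite IH /= eqSS => /andP [-> /eqP ->].
  by rewrite mem_iota in Hi; apply/eqP; lia.
case: w => [|a w] // /andP [Hs /eqP Hm].
exists a, w; split => //; first by rewrite mem_iota; simpl in Hm; lia.
rewrite IH; simpl in Hs, Hm; apply/andP; split; [exact Hs | apply/eqP; lia].
Qed.

Lemma uniq_comps n m : uniq (comps n m).
Proof.
elim: n m => [|n IH] m; first by case: m.
apply: allpairs_uniq_dep; first exact: iota_uniq.
  by move=> i _; apply: IH.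
by move=> [i u] [j v] _ _ /= [-> ->].
Qed.

Fixpoint ccomps (f : seq nat -> bool) (n m : nat) (pre : seq nat) (acc : nat) : nat :=
  if n is n'.+1 then foldl (fun a i => ccomps f n' (m - i) (i :: pre) a) acc (iota 0 m.+1)
  else if m == 0 then f (rev pre) + acc else acc.

Lemma ccompsE f n m pre acc :
  ccomps f n m pre acc = count f [seq rev pre ++ w | w <- comps n m] + acc.
Proof.
elim: n m pre acc => [|n IH] m pre acc.
  by case: m => //=; rewrite cats0 addn0.
have H : forall l acc, foldl (fun a i => ccomps f n (m - i) (i :: pre) a) acc l =
   count f [seq rev pre ++ w | w <- [seq i :: w | i <- l, w <- comps n (m - i)]] + acc.
  elim => [|i l IHl] acc' //=.
  rewrite IHl IH map_cat count_cat addnA; congr (_ + _).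
  rewrite addnC; congr (_ + _).
  by rewrite -map_comp; congr (count f _); apply: eq_map => w /=; rewrite rev_cons cat_rcons.
exact: H.
Qed.

Fixpoint subvs (v : seq nat) (m : nat) : seq (seq nat) :=
  if v is a :: v' then [seq i :: u | i <- iota 0 (minn a m).+1, u <- subvs v' (m - i)]
  else if m == 0 then [:: [::]] else [::].

Lemma mem_subvs v m u :
  (u \in subvs v m) = [&& size u == size v, all2 leq u v & sumn u == m].
Proof.
elim: v m u => [|a v IH] m u.
  case: u => [|b u] /=; case: m => //= m; by rewrite in_nil.
apply/allpairsPdep/idP => [[i [w [Hi Hw ->]]]|].
  move: Hw; rewrite IH /= eqSS => /and3P [-> -> /eqP ->].
  rewrite mem_iota /= ltnS leq_min in Hi; case/andP: Hi => -> Hm.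
  apply/eqP; lia.
case: u => [|b u] // /and3P [Hs /andP [Hb Ha] /eqP Hm].
exists b, u; split => //; first by rewrite mem_iota; simpl in Hm; lia.
rewrite IH; simpl in Hs, Hm; apply/and3P; split; [exact Hs | exact Ha | apply/eqP; lia].
Qed.

Definition cnt k (s : seq (seq bool)) : seq nat := [seq count_mem x s | x <- allbs k].
Definition ofv k (v : seq nat) : seq (seq bool) :=
  flatten [seq nseq p.1 p.2 | p <- zip v (allbs k)].
Definition vsub (v u : seq nat) := [seq p.1 - p.2 | p <- zip v u].
Definition wf k (s : seq (seq bool)) := all (fun c => size c == k) s.

Lemma wf_mem k s x : wf k s -> x \in s -> x \in allbs k.
Proof. by move=> /allP H /H; rewrite mem_allbs. Qed.

Lemma size_cnt k s : size (cnt k s) = 2 ^ k.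
Proof. by rewrite size_map size_allbs. Qed.

Lemma nth_cnt k s x : x \in allbs k ->
  nth 0 (cnt k s) (index x (allbs k)) = count_mem x s.
Proof. by move=> Hx; rewrite (nth_map x) ?index_mem // nth_index. Qed.

Lemma cnt_eq k s t : wf k s -> wf k t -> (cnt k s == cnt k t) = perm_eq s t.
Proof.
move=> Hs Ht; apply/eqP/idP => [H|/seq.permP H]; last by apply: eq_map => x; apply: H.
apply/allP => x; rewrite mem_cat => Hx.
have Hx' : x \in allbs k by case/orP: Hx; [exact: wf_mem Hs | exact: wf_mem Ht].
by rewrite /= -!(nth_cnt _ Hx') H.
Qed.

Lemma mem_zip2 (S T : eqType) (s : seq S) (t : seq T) a b : (a, b) \in zip s t -> b \in t.
Proof.
elim: s t => [|x s IH] [|y t] //=; rewrite inE => /orP [/eqP [_ ->]|/IH H].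
  exact: mem_head.
by rewrite H orbT.
Qed.

Lemma count_ofv k v x : size v = 2 ^ k -> x \in allbs k ->
  count_mem x (ofv k v) = nth 0 v (index x (allbs k)).
Proof.
rewrite -size_allbs /ofv; move: (uniq_allbs k).
elim: (allbs k) v => [|y l IH] [|a v] //= /andP [Hy Hu] [Hs].
rewrite inE count_cat count_nseq /=; case/orP => [/eqP ->|Hx].
  rewrite eqxx mul1n; suff -> : count_mem y (flatten [seq nseq p.1 p.2 | p <- zip v l]) = 0.
    by rewrite addn0.
  apply/eqP; rewrite -leqn0 leqNgt -has_count; apply/hasP => -[z /flattenP [w /mapP [[n c] /= Hnc ->]]].
  rewrite mem_nseq => /andP [_ /eqP ->] /eqP Hyc.
  by move: (mem_zip2 Hnc); rewrite Hyc (negbTE Hy).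
have -> : (y == x) = false by apply/negbTE; apply: contraNneq Hy => ->.
by rewrite mul0n add0n IH.
Qed.

Lemma wf_ofv k v : wf k (ofv k v).
Proof.
apply/allP => c /flattenP [w /mapP [[n d] /= Hnd ->]].
rewrite mem_nseq => /andP [_ /eqP ->]; move: (mem_zip2 Hnd).
by rewrite mem_allbs.
Qed.

Lemma cnt_ofv k v : size v = 2 ^ k -> cnt k (ofv k v) = v.
Proof.
move=> Hv; apply: (@eq_from_nth _ 0); first by rewrite size_cnt.
move=> i; rewrite size_cnt -size_allbs => Hi.
rewrite /cnt (nth_map [::]) // count_ofv ?mem_nth // index_uniq //; exact: uniq_allbs.
Qed.

Lemma size_ofv k v : size v = 2 ^ k -> size (ofv k v) = sumn v.
Proof.
rewrite -size_allbs /ofv size_flatten /shape -map_comp.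
elim: (allbs k) v => [|y l IH] [|a v] //= [Hs].
by rewrite size_nseq IH.
Qed.

Lemma sumn_addeq (T : eqType) (c : T) (f : T -> nat) l :
  sumn [seq (c == x) + f x | x <- l] = count_mem c l + sumn (map f l).
Proof. elim: l => //= x l ->; rewrite eq_sym; lia. Qed.

Lemma sumn_cnt k s : wf k s -> sumn (cnt k s) = size s.
Proof.
elim: s => [|c s IH] /=.
  by rewrite /cnt; elim: (allbs k) => //= x l ->.
move=> /andP [Hc Hs]; rewrite -IH // /cnt /=.
rewrite sumn_addeq count_uniq_mem ?uniq_allbs // mem_allbs Hc.
by [].
Qed.

Lemma zip_map2 (T U V : Type) (f : T -> U) (g : T -> V) (l : seq T) :
  zip (map f l) (map g l) = map (fun x => (f x, g x)) l.
Proof. by elim: l => //= x l ->. Qed.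

Lemma vsub_cnt k s t : vsub (cnt k (s ++ t)) (cnt k s) = cnt k t.
Proof.
rewrite /vsub /cnt zip_map2 -map_comp; apply: eq_map => x /=.
by rewrite count_cat addKn.
Qed.

Lemma le_cnt k s t : all2 leq (cnt k s) (cnt k (s ++ t)).
Proof.
rewrite /cnt; elim: (allbs k) => //= x l ->; by rewrite count_cat leq_addr.
Qed.

Lemma ofv_cnt k s : wf k s -> perm_eq (ofv k (cnt k s)) s.
Proof. by move=> Hs; rewrite -(cnt_eq (k:=k)) ?wf_ofv // cnt_ofv // size_cnt. Qed.

Definition act (p : seq nat) (c : seq bool) := [seq nth false c i | i <- p].
Definition tab k (p : seq nat) := [seq index (act p x) (allbs k) | x <- allbs k].
Definition vperm (t v : seq nat) := [seq nth 0 v i | i <- t].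
Definition pl k (s : 'S_k) : seq nat := [seq val (s i) | i <- enum 'I_k].

Lemma nth_map_enum (T : Type) (x0 : T) n (f : 'I_n -> T) (j : 'I_n) :
  nth x0 [seq f i | i <- enum 'I_n] j = f j.
Proof. by rewrite (nth_map j) ?size_enum_ord ?ltn_ord // nth_ord_enum. Qed.

Lemma size_act p c : size (act p c) = size p.
Proof. by rewrite size_map. Qed.

Lemma size_pl k (s : 'S_k) : size (pl s) = k.
Proof. by rewrite size_map size_enum_ord. Qed.

Lemma actE k (s : 'S_k) c : act (pl s) c = [seq nth false c (s i) | i <- enum 'I_k].
Proof. by rewrite /act /pl -map_comp. Qed.

Lemma nth_act_pl k (s : 'S_k) c (j : 'I_k) : nth false (act (pl s) c) j = nth false c (s j).
Proof. by rewrite actE nth_map_enum. Qed.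

Lemma act_plM k (s t : 'S_k) c : act (pl s) (act (pl t) c) = act (pl (s * t)) c.
Proof.
rewrite [LHS]actE [RHS]actE; apply: eq_map => i.
by rewrite nth_act_pl permM.
Qed.

Lemma act_pl1 k c : size c = k -> act (pl (1%g : 'S_k)) c = c.
Proof.
move=> Hc; rewrite /act /pl.
have -> : [seq val ((1%g : 'S_k) i) | i <- enum 'I_k] = iota 0 k.
  by rewrite -val_enum_ord; apply: eq_map => i; rewrite perm1.
by rewrite map_nth_iota0 -Hc ?take_size.
Qed.

Lemma act_pl_allbs k (s : 'S_k) c : act (pl s) c \in allbs k.
Proof. by rewrite mem_allbs size_act size_pl. Qed.

Lemma pl_perm k (s : 'S_k) : pl s \in permutations (iota 0 k).
Proof.
rewrite mem_permutations; apply: uniq_perm.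
- rewrite /pl map_inj_uniq ?enum_uniq //.
  by move=> i j /val_inj /perm_inj.
- exact: iota_uniq.
move=> x; rewrite mem_iota add0n; apply/mapP/idP => [[i _ ->]|Hx]; first exact: ltn_ord.
exists ((s^-1)%g (Ordinal Hx)); first by rewrite mem_enum.
by rewrite permKV.
Qed.

Lemma perm_pl k p : p \in permutations (iota 0 k) -> exists s : 'S_k, p = pl s.
Proof.
rewrite mem_permutations => Hp.
have Hsz : size p = k by rewrite (perm_size Hp) size_iota.
have Hu : uniq p by rewrite (perm_uniq Hp) iota_uniq.
have Hlt : forall i : 'I_k, nth 0 p i < k.
  move=> i; have : nth 0 p i \in iota 0 k by rewrite -(perm_mem Hp) mem_nth // Hsz.
  by rewrite mem_iota.
pose f (i : 'I_k) := Ordinal (Hlt i).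
have finj : injective f.
  move=> i j [] /eqP; rewrite nth_uniq ?Hsz // => /eqP; exact: val_inj.
exists (perm finj); apply: (@eq_from_nth _ 0); first by rewrite size_pl.
move=> i; rewrite Hsz => Hi.
by rewrite /pl (nth_map (Ordinal Hi)) ?size_enum_ord // permE /= nth_enum_ord.
Qed.

Lemma act_plK k (s : 'S_k) c : size c = k -> act (pl (s^-1)%g) (act (pl s) c) = c.
Proof. by move=> Hc; rewrite act_plM mulVg act_pl1. Qed.

Lemma vperm_tab k (s : 'S_k) t : wf k t ->
  vperm (tab k (pl s)) (cnt k t) = cnt k (map (act (pl (s^-1)%g)) t).
Proof.
move=> Ht; rewrite /vperm /tab /cnt -map_comp; apply/eq_in_map => x.
rewrite mem_allbs => /eqP Hx /=.
rewrite nth_cnt ?act_pl_allbs // count_map.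
apply: eq_in_count => c Hc /=.
have Hcs : size c = k by apply/eqP; move/allP: Ht => /(_ c Hc).
apply/eqP/eqP => [->|<-]; first by rewrite act_plK.
by rewrite act_plM mulgV act_pl1.
Qed.

Fixpoint xorl (a b : seq bool) : seq bool :=
  match a, b with x :: a', y :: b' => addb x y :: xorl a' b' | _, _ => [::] end.
Fixpoint xorsum k (sel : seq bool) (t : seq (seq bool)) : seq bool :=
  match sel, t with
  | b :: sel', c :: t' => if b then xorl c (xorsum k sel' t') else xorsum k sel' t'
  | _, _ => nseq k false end.
Definition indep k (t : seq (seq bool)) :=
  allf (fun sel => if hasf id sel then hasf id (xorsum k sel t) else true) (allbs k).

Lemma size_xorl a b : size (xorl a b) = minn (size a) (size b).
Proof. elim: a b => [|x a IH] [|y b] /=; rewrite ?IH; lia. Qed.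

Lemma nth_xorl a b i : i < size a -> i < size b -> nth false (xorl a b) i = nth false a i (+) nth false b i.
Proof. by elim: a b i => [|x a IH] [|y b] [|i] //= H1 H2; apply: IH. Qed.

Lemma size_xorsum k sel t : wf k t -> size (xorsum k sel t) = k.
Proof.
elim: sel t => [|b sel IH] [|c t] /=; rewrite ?size_nseq //.
move=> /andP [/eqP Hc Ht]; case: b; rewrite ?size_xorl ?IH ?Hc ?minnn //.
Qed.

Lemma nth_xorsum k sel t i : wf k t -> size sel = size t -> i < k ->
  nth false (xorsum k sel t) i =
  odd (\sum_(j < size t) (nth false sel j && nth false (nth [::] t j) i)).
Proof.
elim: sel t => [|b sel IH] [|c t] //=.
  by move=> _ _ Hi; rewrite big_ord0 nth_nseq Hi.
move=> /andP [/eqP Hc Ht] [Hs] Hi.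
rewrite big_ord_recl /= oddD -IH //.
case: b => /=; last by [].
rewrite nth_xorl ?Hc ?size_xorsum //.
by case: (nth false c i).
Qed.

Import GRing.Theory.
Section Mx.
Local Open Scope ring_scope.

Definition colsM m n (A : 'M['F_2]_(m, n)) : seq (seq bool) :=
  [seq [seq A i j != 0 | i <- enum 'I_m] | j <- enum 'I_n].
Definition mxc m n (t : seq (seq bool)) : 'M['F_2]_(m, n) :=
  \matrix_(i, j) (nth false (nth [::] t j) i)%:R.

Lemma F2E (x : 'F_2) : x = (x != 0)%:R.
Proof. by case: x => [[|[|n]] Hx] //; apply/val_inj. Qed.

Lemma F2nat (b : bool) : ((b%:R : 'F_2) != 0) = b.
Proof. by case: b; rewrite ?oner_neq0 ?eqxx. Qed.

Lemma size_colsM m n (A : 'M['F_2]_(m, n)) : size (colsM A) = n.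
Proof. by rewrite size_map size_enum_ord. Qed.

Lemma wf_colsM m n (A : 'M['F_2]_(m, n)) : wf m (colsM A).
Proof. by apply/allP => c /mapP [j _ ->]; rewrite size_map size_enum_ord. Qed.

Lemma nth_colsM m n (A : 'M['F_2]_(m, n)) (i : 'I_m) (j : 'I_n) :
  nth false (nth [::] (colsM A) j) i = (A i j != 0).
Proof. by rewrite /colsM nth_map_enum nth_map_enum. Qed.

Lemma colsM_inj m n (A B : 'M['F_2]_(m, n)) : colsM A = colsM B -> A = B.
Proof.
move=> H; apply/matrixP => i j.
by rewrite (F2E (A i j)) (F2E (B i j)) -!nth_colsM H.
Qed.

Lemma colsM_mxc m n t : size t = n -> wf m t -> colsM (mxc m n t) = t.
Proof.
move=> Hs Hw; apply: (@eq_from_nth _ [::]); first by rewrite size_colsM.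
move=> j; rewrite size_colsM => Hj.
have Hsz : size (nth [::] t j) = m by apply/eqP; move/allP: Hw; apply; rewrite mem_nth ?Hs.
apply: (@eq_from_nth _ false); first by rewrite Hsz /colsM (nth_map (Ordinal Hj)) ?size_enum_ord // size_map size_enum_ord.
move=> i; rewrite /colsM (nth_map (Ordinal Hj)) ?size_enum_ord // size_map size_enum_ord => Hi.
by rewrite (nth_map (Ordinal Hi)) ?size_enum_ord // mxE F2nat !nth_enum_ord.
Qed.

Lemma colsM_row_perm m n (s : 'S_m) (A : 'M['F_2]_(m, n)) :
  colsM (row_perm s A) = map (act (pl s)) (colsM A).
Proof.
rewrite /colsM -map_comp; apply: eq_map => j /=.
rewrite actE; apply: eq_map => i; by rewrite mxE nth_map_enum.
Qed.

Lemma colsM_col_perm m n (s : 'S_n) (A : 'M['F_2]_(m, n)) :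
  perm_eq (colsM (col_perm s A)) (colsM A).
Proof.
have -> : colsM (col_perm s A) = map (fun j => [seq A i j != 0 | i <- enum 'I_m]) (map s (enum 'I_n)).
  by rewrite /colsM -[RHS]map_comp; apply: eq_map => j; rewrite /=; apply: eq_map => i; rewrite mxE.
rewrite /colsM; apply: perm_map; apply: uniq_perm.
- by rewrite map_inj_uniq ?enum_uniq //; exact: perm_inj.
- exact: enum_uniq.
move=> j; rewrite mem_enum; apply/mapP; exists ((s^-1)%g j); first by rewrite mem_enum.
by rewrite permKV.
Qed.

Lemma perm_colsM m n (A B : 'M['F_2]_(m, n)) :
  perm_eq (colsM A) (colsM B) -> exists s : 'S_n, A = col_perm s B.
Proof.
have Hsz : size (colsM B) == n by rewrite size_colsM.
pose tB := Tuple Hsz.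
move=> H; have /tuple_permP [s Hs] : perm_eq (colsM A) tB by [].
exists s; apply/matrixP => i j; rewrite mxE.
rewrite (F2E (A i j)) (F2E (B i (s j))) -!nth_colsM Hs.
by rewrite -(tnth_nth [::] [tuple tnth tB (s i0) | i0 < n] j) tnth_mktuple (tnth_nth [::]).
Qed.
End Mx.

Section Mx2.
Local Open Scope ring_scope.

Lemma rowv_neq0 k (v : 'rV['F_2]_k) : (v != 0) = has (fun i => v 0 i != 0) (enum 'I_k).
Proof.
apply/idP/hasP => [Hv|[i _ Hi]].
  have : exists i, v 0 i != 0.
    apply/existsP; apply: contraR Hv; rewrite negb_exists => /forallP H.
    apply/eqP/matrixP => i j; rewrite (ord1 i) mxE; apply/eqP.
    by move: (H j); rewrite negbK.
  by case=> i Hi; exists i; rewrite ?mem_enum.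
by apply: contraNneq Hi => ->; rewrite mxE.
Qed.

Lemma F2odd (n : nat) : ((n%:R : 'F_2) != 0) = odd n.
Proof. by rewrite -(Fp_nat_mod (isT : prime 2)) modn2 F2nat. Qed.

Lemma xorsum_mx k (M : 'M['F_2]_k) (u : 'rV['F_2]_k) :
  xorsum k [seq u 0 j != 0 | j <- enum 'I_k] (colsM M) =
  [seq (u *m M^T) 0 i != 0 | i <- enum 'I_k].
Proof.
apply: (@eq_from_nth _ false); first by rewrite size_xorsum ?wf_colsM // size_map size_enum_ord.
move=> i; rewrite size_xorsum ?wf_colsM // => Hi.
rewrite nth_xorsum ?wf_colsM //; last by rewrite size_map size_enum_ord size_colsM.
rewrite (nth_map (Ordinal Hi)) ?size_enum_ord //.
have -> : nth (Ordinal Hi) (enum 'I_k) i = Ordinal Hi by apply: val_inj; rewrite /= nth_enum_ord.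
change i with (nat_of_ord (Ordinal Hi)).
move: (Ordinal Hi) => I.
rewrite size_colsM !mxE -F2odd natr_sum; congr (_ != 0); apply: eq_bigr => j _.
rewrite !mxE nth_map_enum nth_colsM.
rewrite {2}(F2E (u 0 j)) {2}(F2E (M I j)) -natrM mulnb.
by [].
Qed.

Lemma unit_indep k (M : 'M['F_2]_k) : (M \in unitmx) = indep k (colsM M).
Proof.
rewrite -unitmx_tr -row_free_unit; apply/idP/idP => [Hf|Hi].
  rewrite /indep allfE; apply/allP => sel; rewrite mem_allbs => /eqP Hsel.
  rewrite !hasfE; case: ifP => // Hs.
  pose u : 'rV['F_2]_k := \row_j ((nth false sel j)%:R : 'F_2).
  have Hsu : [seq u 0 j != 0 | j <- enum 'I_k] = sel.
    apply: (@eq_from_nth _ false); first by rewrite size_map size_enum_ord Hsel.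
    move=> j; rewrite size_map size_enum_ord => Hj.
    rewrite (nth_map (Ordinal Hj)) ?size_enum_ord // mxE F2nat.
    by have -> : nth (Ordinal Hj) (enum 'I_k) j = Ordinal Hj by apply: val_inj; rewrite /= nth_enum_ord.
  rewrite -Hsu xorsum_mx has_map.
  have : u *m M^T != 0 by rewrite mulmx_free_eq0 // rowv_neq0 -Hsu has_map in Hs *.
  by rewrite rowv_neq0.
apply: inj_row_free => u Hu; apply/eqP; apply: contraTT Hi => Hu0.
rewrite /indep allfE; apply/allPn; exists [seq u 0 j != 0 | j <- enum 'I_k].
  by rewrite mem_allbs size_map size_enum_ord.
rewrite !hasfE has_map -rowv_neq0 Hu0 xorsum_mx has_map -rowv_neq0 Hu.
by rewrite eqxx.
Qed.
End Mx2.

Section Mx3.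
Local Open Scope ring_scope.

Lemma simP k (A B : 'M['F_2]_(k, k + k)) :
  reflect (exists s t, A = perm_mx s *m B *m perm_mx t) (sim2 A B).
Proof.
apply: (iffP existsP) => [[P /existsP [Q /and3P [/is_perm_mxP [s ->] /is_perm_mxP [t ->] /eqP ->]]]|[s [t ->]]].
  by exists s, t.
exists (perm_mx s); apply/existsP; exists (perm_mx t).
by rewrite !perm_mx_is_perm eqxx.
Qed.

Lemma sim2_refl k (A : 'M['F_2]_(k, k + k)) : sim2 A A.
Proof. by apply/simP; exists 1%g, 1%g; rewrite !perm_mx1 mul1mx mulmx1. Qed.

Lemma sim2_sym k (A B : 'M['F_2]_(k, k + k)) : sim2 A B -> sim2 B A.
Proof.
move=> /simP [s [t ->]]; apply/simP; exists (s^-1)%g, (t^-1)%g.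
by rewrite !mulmxA -perm_mxM mulVg perm_mx1 mul1mx -mulmxA -perm_mxM mulgV perm_mx1 mulmx1.
Qed.

Lemma sim2_trans k (A B C : 'M['F_2]_(k, k + k)) : sim2 A B -> sim2 B C -> sim2 A C.
Proof.
move=> /simP [s [t ->]] /simP [s' [t' ->]]; apply/simP; exists (s * s')%g, (t' * t)%g.
by rewrite !perm_mxM !mulmxA.
Qed.

Lemma cnt_mulperm k n (X : 'M['F_2]_(k, n)) (t : 'S_n) :
  cnt k (colsM (X *m perm_mx t)) = cnt k (colsM X).
Proof.
apply/eqP; rewrite cnt_eq ?wf_colsM //.
by rewrite -[t]invgK -col_permE colsM_col_perm.
Qed.

Definition orbitv k (A : 'M['F_2]_(k, k + k)) :=
  [seq cnt k (colsM (row_perm s A)) | s <- enum {perm 'I_k}].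
Definition key k (A : 'M['F_2]_(k, k + k)) := lmin (cnt k (colsM A)) (orbitv A).

Lemma orbitvP k (A : 'M['F_2]_(k, k + k)) w :
  reflect (exists s : 'S_k, w = cnt k (colsM (row_perm s A))) (w \in orbitv A).
Proof.
apply: (iffP mapP) => [[s _ ->]|[s ->]]; first by exists s.
by exists s; rewrite ?mem_enum.
Qed.

Lemma cnt_in_orbitv k (A : 'M['F_2]_(k, k + k)) : cnt k (colsM A) \in orbitv A.
Proof. by apply/orbitvP; exists 1%g; rewrite row_perm1. Qed.

Lemma mem_orbitv k (A : 'M['F_2]_(k, k + k)) w :
  (w \in cnt k (colsM A) :: orbitv A) = (w \in orbitv A).
Proof. by rewrite inE; case: eqP => // ->; rewrite cnt_in_orbitv. Qed.

Lemma key_in_orbitv k (A : 'M['F_2]_(k, k + k)) : key A \in orbitv A.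
Proof. by rewrite -mem_orbitv lmin_mem. Qed.

Lemma key_le k (A : 'M['F_2]_(k, k + k)) w : w \in orbitv A -> lexn (key A) w.
Proof. by rewrite -mem_orbitv; exact: lmin_le. Qed.

Lemma orbitv_sim k (A B : 'M['F_2]_(k, k + k)) w :
  sim2 A B -> w \in orbitv A -> w \in orbitv B.
Proof.
move=> /simP [s [t ->]] /orbitvP [r ->]; apply/orbitvP; exists (r * s)%g.
by rewrite row_permE !mulmxA -perm_mxM cnt_mulperm // -row_permE.
Qed.

Lemma key_sim k (A B : 'M['F_2]_(k, k + k)) : sim2 A B -> key A = key B.
Proof.
move=> H; apply: lexn_anti; apply: key_le.
  by apply: (orbitv_sim (sim2_sym H)); exact: key_in_orbitv.
by apply: (orbitv_sim H); exact: key_in_orbitv.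
Qed.

Lemma key_sim_inv k (A B : 'M['F_2]_(k, k + k)) : key A = key B -> sim2 A B.
Proof.
move: (key_in_orbitv A) (key_in_orbitv B) => /orbitvP [s ->] /orbitvP [t ->] /eqP.
rewrite cnt_eq ?wf_colsM // => /perm_colsM [r].
rewrite col_permE !row_permE => H; apply/simP; exists (s^-1 * t)%g, (r^-1)%g.
by rewrite perm_mxM -!mulmxA [perm_mx t *m _]mulmxA -H mulmxA -perm_mxM mulVg perm_mx1 mul1mx.
Qed.
End Mx3.

Section Mx4.
Local Open Scope ring_scope.

Lemma nth_colsM_nat m n (A : 'M['F_2]_(m, n)) j (Hj : (j < n)%N) :
  nth [::] (colsM A) j = [seq A i (Ordinal Hj) != 0 | i <- enum 'I_m].
Proof.
rewrite /colsM (nth_map (Ordinal Hj)) ?size_enum_ord //; apply: eq_map => i.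
by congr (A i _ != 0); apply: val_inj; rewrite /= nth_enum_ord.
Qed.

Lemma colsM_lsub m n1 n2 (A : 'M['F_2]_(m, n1 + n2)) :
  colsM (lsubmx A) = take n1 (colsM A).
Proof.
apply: (@eq_from_nth _ [::]); first by rewrite size_colsM size_takel // size_colsM leq_addr.
move=> j; rewrite size_colsM => Hj.
have Hj' : (j < n1 + n2)%N by apply: leq_trans Hj (leq_addr _ _).
rewrite nth_take // (nth_colsM_nat _ Hj) (nth_colsM_nat _ Hj'); apply: eq_map => i.
by rewrite mxE; congr (A i _ != 0); apply: val_inj.
Qed.

Lemma colsM_rsub m n1 n2 (A : 'M['F_2]_(m, n1 + n2)) :
  colsM (rsubmx A) = drop n1 (colsM A).
Proof.
apply: (@eq_from_nth _ [::]); first by rewrite size_colsM size_drop size_colsM addKn.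
move=> j; rewrite size_colsM => Hj.
have Hj' : (n1 + j < n1 + n2)%N by rewrite ltn_add2l.
rewrite nth_drop (nth_colsM_nat _ Hj) (nth_colsM_nat _ Hj'); apply: eq_map => i.
by rewrite mxE; congr (A i _ != 0); apply: val_inj.
Qed.

Lemma GLP k (A : 'M['F_2]_(k, k + k)) :
  (A \in GL2_pairs k) = indep k (take k (colsM A)) && indep k (drop k (colsM A)).
Proof. by rewrite inE !unit_indep colsM_lsub colsM_rsub. Qed.

Lemma GL_row_perm k (s : 'S_k) (A : 'M['F_2]_(k, k + k)) :
  A \in GL2_pairs k -> row_perm s A \in GL2_pairs k.
Proof.
by rewrite !inE row_permE -mulmx_lsub -mulmx_rsub !unitmx_mul unitmx_perm.
Qed.

Lemma colsM_eq_col m n (M N : 'M['F_2]_(m, n)) j j' :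
  [seq M i j != 0 | i <- enum 'I_m] = [seq N i j' != 0 | i <- enum 'I_m] ->
  M *m delta_mx j (0 : 'I_1) = N *m delta_mx j' (0 : 'I_1).
Proof.
move=> H; rewrite -!colE; apply/matrixP => i z; rewrite !mxE.
rewrite (F2E (M i j)) (F2E (N i j')).
by move: (congr1 (fun l => nth false l i) H); rewrite !nth_map_enum => ->.
Qed.

Lemma unit_uniq k (M : 'M['F_2]_k) : M \in unitmx -> uniq (colsM M).
Proof.
move=> Hu; rewrite /colsM map_inj_uniq ?enum_uniq // => j j' /colsM_eq_col H.
have := congr1 (mulmx (invmx M)) H; rewrite !mulKmx // => /matrixP /(_ j 0).
rewrite !mxE !eqxx /=; case: eqP => // _ /eqP; by rewrite eq_sym oner_eq0.
Qed.

Lemma unit_nozero k (M : 'M['F_2]_k) : M \in unitmx -> nseq k false \notin colsM M.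
Proof.
move=> Hu; apply/mapP => -[j _ Hj].
have H : [seq M i j != 0 | i <- enum 'I_k] = [seq (0 : 'M['F_2]_(k, k)) i j != 0 | i <- enum 'I_k].
  rewrite -Hj (@eq_map _ _ _ (fun _ => false)); last by move=> i; rewrite mxE eqxx.
  have Hl : forall (l : seq 'I_k), [seq false | _ <- l] = nseq (size l) false by elim=> //= x l ->.
  by rewrite Hl size_enum_ord.
have := congr1 (mulmx (invmx M)) (colsM_eq_col H); rewrite mul0mx mulmx0 mulKmx // => /matrixP /(_ j 0).
by rewrite !mxE !eqxx /= => /eqP; rewrite oner_eq0.
Qed.
End Mx4.

Definition small (v : seq nat) := if head 0 v == 0 then allf (fun a => a <= 2) v else false.
Definition splittable k (v : seq nat) :=
  hasf (fun u => if indep k (ofv k u) then indep k (ofv k (vsub v u)) else false) (subvs v k).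
Definition Tk k := [seq tab k p | p <- permutations (iota 0 k)].
Definition canonw (T : seq (seq nat)) (v : seq nat) := allf (fun t => lexm v v t) T.
Definition predc (T : seq (seq nat)) k (v : seq nat) :=
  if small v then (if canonw T v then splittable k v else false) else false.
Definition countL k := let T := Tk k in ccomps (predc T k) (2 ^ k) (k + k) [::] 0.

Lemma allbs_head k : exists r, allbs k = nseq k false :: r.
Proof.
elim: k => [|k [r IH]]; first by exists [::].
by rewrite /= IH /=; eexists.
Qed.

Lemma wf_take k n s : wf k s -> wf k (take n s).
Proof. by move=> /allP H; apply/allP => x /mem_take /H. Qed.

Lemma wf_drop k n s : wf k s -> wf k (drop n s).
Proof. by move=> /allP H; apply/allP => x /mem_drop /H. Qed.

Lemma indep_perm k t t' : wf k t -> wf k t' -> size t = k -> perm_eq t t' ->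
  indep k t = indep k t'.
Proof.
move=> Ht Ht' Hs Hp.
have Hs' : size t' = k by rewrite -(perm_size Hp).
rewrite -(colsM_mxc Hs Ht) -(colsM_mxc Hs' Ht') in Hp *.
case/perm_colsM: Hp => s ->.
by rewrite -!unit_indep col_permE unitmx_mul unitmx_perm andbT.
Qed.

Section Mx5.
Local Open Scope ring_scope.

Lemma GL_units k (B : 'M['F_2]_(k, k + k)) : B \in GL2_pairs k ->
  (lsubmx B \in unitmx) /\ (rsubmx B \in unitmx).
Proof. by rewrite inE => /andP. Qed.

Lemma colsM_cat k (B : 'M['F_2]_(k, k + k)) :
  colsM B = colsM (lsubmx B) ++ colsM (rsubmx B).
Proof. by rewrite colsM_lsub colsM_rsub cat_take_drop. Qed.

Lemma small_GL k (B : 'M['F_2]_(k, k + k)) : B \in GL2_pairs k -> small (cnt k (colsM B)).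
Proof.
move=> /GL_units [H1 H2]; rewrite /small /cnt.
case: (allbs_head k) => r Er; rewrite {1}Er /= colsM_cat count_cat.
rewrite !(count_memPn (unit_nozero _)) //= allfE.
apply/allP => a /mapP [x _ ->]; rewrite count_cat.
rewrite !count_uniq_mem ?unit_uniq //.
by case: (x \in _); case: (x \in _).
Qed.

Lemma split_GL k (B : 'M['F_2]_(k, k + k)) : B \in GL2_pairs k ->
  splittable k (cnt k (colsM B)).
Proof.
rewrite GLP => /andP [H1 H2].
have Hw := wf_colsM B.
have Hsz := size_colsM B.
move: H1 H2; set s := colsM B => H1 H2.
have Hw1 : wf k (take k s) := wf_take k Hw.
have Hw2 : wf k (drop k s) := wf_drop k Hw.
have Hs1 : size (take k s) = k by rewrite size_takel // Hsz leq_addr.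
have Hs2 : size (drop k s) = k by rewrite size_drop Hsz addKn.
rewrite /splittable hasfE; rewrite -[s](cat_take_drop k); apply/hasP.
exists (cnt k (take k s)).
  rewrite mem_subvs !size_cnt eqxx le_cnt sumn_cnt // Hs1 eqxx //.
rewrite vsub_cnt.
rewrite (indep_perm (wf_ofv _ _) Hw1 _ (ofv_cnt Hw1)); last by rewrite size_ofv ?size_cnt // sumn_cnt.
rewrite (indep_perm (wf_ofv _ _) Hw2 _ (ofv_cnt Hw2)); last by rewrite size_ofv ?size_cnt // sumn_cnt.
by rewrite H1 H2.
Qed.

Lemma canon_key k (A : 'M['F_2]_(k, k + k)) : canonw (Tk k) (key A).
Proof.
rewrite /canonw allfE; apply/allP => t /mapP [p Hp ->]; rewrite lexmE.
case: (perm_pl Hp) => r ->.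
case/orbitvP: (key_in_orbitv A) => s Hk.
rewrite [in X in lexn _ X]Hk -/(vperm _ _) vperm_tab ?wf_colsM //.
rewrite -colsM_row_perm -row_permM; apply: key_le; apply/orbitvP; eexists; reflexivity.
Qed.

Lemma key_GL k (A : 'M['F_2]_(k, k + k)) : A \in GL2_pairs k ->
  (key A \in comps (2 ^ k) (k + k)) && predc (Tk k) k (key A).
Proof.
move=> HA; case/orbitvP: (key_in_orbitv A) => s Hk.
have HB := GL_row_perm s HA.
rewrite /predc canon_key Hk small_GL // split_GL // andbT.
by rewrite mem_comps size_cnt eqxx sumn_cnt ?wf_colsM // size_colsM eqxx.
Qed.
End Mx5.

Lemma nth_vsub v u i : size u = size v -> nth 0 (vsub v u) i = nth 0 v i - nth 0 u i.
Proof.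
elim: v u i => [|a v IH] [|b u] [|i] //= [Hs]. all: try exact: (IH u i Hs).
Qed.

Lemma size_vsub v u : size u = size v -> size (vsub v u) = size v.
Proof. by move=> H; rewrite size_map size_zip H minnn. Qed.

Lemma all2_nth v u i : all2 leq u v -> nth 0 u i <= nth 0 v i.
Proof.
by elim: u v i => [|b u IH] [|a v] [|i] //= /andP [H1 H2]; try exact: IH.
Qed.

Lemma sumn_vsub v u : size u = size v -> all2 leq u v -> sumn (vsub v u) + sumn u = sumn v.
Proof.
elim: v u => [|a v IH] [|b u] //= [Hs] /andP [H1 H2].
rewrite -(IH u) // -/(vsub v u); lia.
Qed.

Section Mx6.
Local Open Scope ring_scope.

Lemma L_key k (v : seq nat) : v \in comps (2 ^ k) (k + k) -> predc (Tk k) k v ->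
  exists2 B : 'M['F_2]_(k, k + k), B \in GL2_pairs k & key B = v.
Proof.
rewrite mem_comps /predc => /andP [/eqP Hv /eqP Hsv].
case: (small v) => //; case Hc : (canonw (Tk k) v) => //.
rewrite /splittable hasfE => /hasP [u]; rewrite mem_subvs => /and3P [/eqP Hu Hle /eqP Hsu].
case Hi1 : (indep k (ofv k u)) => // Hi2.
set s := ofv k u ++ ofv k (vsub v u).
have Hu' : size u = (2 ^ k)%N by rewrite Hu.
have Hvs : size (vsub v u) = (2 ^ k)%N by rewrite size_vsub.
have Hs1 : size (ofv k u) = k by rewrite size_ofv.
have Hs2 : size (ofv k (vsub v u)) = k.
  by rewrite size_ofv //; move: (sumn_vsub Hu Hle); rewrite Hsu Hsv; lia.
have Hs : size s = (k + k)%N by rewrite size_cat Hs1 Hs2.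
have Hw : wf k s by rewrite /wf all_cat -!/(wf _ _) !wf_ofv.
have Hcnt : cnt k s = v.
  apply: (@eq_from_nth _ 0%N); first by rewrite size_cnt.
  move=> i; rewrite size_cnt -size_allbs => Hi.
  rewrite /cnt (nth_map [::]) // count_cat !count_ofv ?mem_nth //.
  rewrite !index_uniq ?uniq_allbs // nth_vsub // subnKC //; exact: all2_nth.
exists (mxc k (k + k) s).
  by rewrite GLP colsM_mxc // take_size_cat // drop_size_cat // Hi1 Hi2.
apply: lexn_anti.
  by apply: key_le; rewrite -Hcnt -{1}(colsM_mxc Hs Hw); exact: cnt_in_orbitv.
case/orbitvP: (key_in_orbitv (mxc k (k + k) s)) => r ->.
rewrite colsM_row_perm colsM_mxc // -[r]invgK -vperm_tab // Hcnt.
move: Hc; rewrite /canonw allfE => /allP /(_ (tab k (pl (r^-1)%g))).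
rewrite lexmE; apply; apply/mapP; exists (pl (r^-1)%g) => //; exact: pl_perm.
Qed.

Lemma card_imset_undup (T U : finType) (f : T -> U) (D : {set T}) :
  #|[set f x | x in D]| = size (undup [seq f x | x <- enum D]).
Proof.
rewrite -(card_uniqP (undup_uniq _)); apply: eq_card => y.
rewrite mem_undup; apply/imsetP/mapP => [[x Hx ->]|[x Hx ->]]; exists x => //.
  by rewrite mem_enum.
by rewrite -mem_enum.
Qed.
End Mx6.

Lemma size_undup_map (T U V : eqType) (f : T -> U) (g : T -> V) (s : seq T) :
  {in s &, forall x y, (f x == f y) = (g x == g y)} ->
  size (undup (map f s)) = size (undup (map g s)).
Proof.
elim: s => [|x s IH] //= H.
have H' : {in s &, forall x y, (f x == f y) = (g x == g y)}.
  by move=> a b Ha Hb; apply: H; rewrite inE ?Ha ?Hb orbT.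
have -> : (f x \in map f s) = (g x \in map g s).
  apply/mapP/mapP => -[y Hy E]; exists y => //; apply/eqP.
    by rewrite -H ?inE ?Hy ?eqxx ?orbT // E.
  by rewrite H ?inE ?Hy ?eqxx ?orbT // E.
by case: ifP => _ /=; rewrite IH.
Qed.

Section Mx7.
Local Open Scope ring_scope.

Lemma card_classes k : card_Cat2 k = count (predc (Tk k) k) (comps (2 ^ k) (k + k)).
Proof.
rewrite /card_Cat2 /sim2_classes card_imset_undup.
rewrite (@size_undup_map _ _ _ _ (@key k)); last first.
  move=> A B; rewrite !mem_enum => HA HB; apply/eqP/eqP => [E|E].
    apply: key_sim; have : B \in [set B0 in GL2_pairs k | sim2 B B0] by rewrite inE HB sim2_refl.
    by rewrite -E inE => /andP [].
  have HAB := key_sim_inv E.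
  apply/setP => C; rewrite !in_set; congr (_ && _).
  apply/idP/idP => H; [exact: sim2_trans (sim2_sym HAB) H | exact: sim2_trans HAB H].
rewrite -size_filter; apply: perm_size; apply: uniq_perm.
- exact: undup_uniq.
- by rewrite filter_uniq // uniq_comps.
move=> v; rewrite mem_undup mem_filter; apply/mapP/idP => [[A HA ->]|].
  by rewrite mem_enum in HA; rewrite andbC key_GL.
move=> /andP [Hp Hv]; case: (L_key Hv Hp) => B HB <-; exists B => //.
by rewrite mem_enum.
Qed.
End Mx7.

Lemma countLE k : countL k = card_Cat2 k.
Proof. by rewrite card_classes /countL ccompsE addn0 map_id. Qed.

Lemma countL1 : countL 1 = 1. Proof. vm_compute. reflexivity. Qed.
Lemma countL2 : countL 2 = 4. Proof. vm_compute. reflexivity. Qed.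
Lemma countL3 : countL 3 = 58. Proof. vm_compute. reflexivity. Qed.
Lemma countL4 : countL 4 = 4822. Proof. vm_compute. reflexivity. Qed.

Theorem proposition10 :
  [/\ card_Cat2 1 = 1%N, card_Cat2 2 = 4%N, card_Cat2 3 = 58%N & card_Cat2 4 = 4822%N].
Proof.
by rewrite -!countLE countL1 countL2 countL3 countL4.
Qed.
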